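(* Let $A=(a_{i,k})_{0\le i,k\le d-1}\in\mathbb{Z}^{d\times d}$ be an idealizing matrix. Then for every $1\le j\le d-1$, $a_{j,j}$ divides $a_{i,k}$ for all $0\le i,k\le j$.
   Context: An idealizing matrix is an upper triangular integer matrix $A=(a_{i,k})_{0\le i,k\le d-1}$ with nonzero diagonal entries such that, for each $0\le j\le d-2$, the vector obtained by shifting the $j$-th column down by one, namely $(0,a_{0,j},a_{1,j},\dots,a_{d-2,j})^T$, lies in the $\mathbb{Z}$-span of columns $0,1,\dots,j+1$ of $A$. (Columns are indexed from $0$; the $j$-th column represents the coefficient vector of a polynomial of degree $j$.) *)

(* Defs.v *)
From HB Require Import structures.
From mathcomp Require Import all_boot all_order all_algebra.
Set Implicit Arguments. Unset Strict Implicit. Unset Printing Implicit Defensive.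
Import Order.TTheory GRing.Theory Num.Theory.
Local Open Scope ring_scope.

(* An idealizing matrix: A : 'M[int]_d, indices 0..d-1 ('I_d).
   - upper triangular: A i k = 0 when k < i;
   - nonzero diagonal;
   - for every column j with j <= d-2, the column shifted down by one,
     s = (0, A 0 j, ..., A (d-2) j)^T, lies in the Z-span of columns
     0..j+1: there are integer coefficients c k (zero for k > j+1) with
     s i = \sum_k c k * A i k for every row i. *)
Definition idealizing (d : nat) (A : 'M[int]_d) : Prop :=
  [/\ (forall i k : 'I_d, (k < i)%N -> A i k = 0),
      (forall i : 'I_d, A i i != 0) &
      (forall j : 'I_d, (j.+2 <= d)%N ->
         exists c : 'I_d -> int,
           (forall k : 'I_d, (j.+1 < k)%N -> c k = 0) /\
           (forall i : 'I_d, nat_of_ord i = 0%N ->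
               \sum_(k < d) c k * A i k = 0) /\
           (forall i i' : 'I_d, nat_of_ord i = i'.+1 ->
               \sum_(k < d) c k * A i k = A i' j))].

(* Main.v *)
Require Import Defs.
From HB Require Import structures.
From mathcomp Require Import all_boot all_order all_algebra.
Import Order.TTheory GRing.Theory Num.Theory.
Local Open Scope ring_scope.

Lemma key (d : nat) (A : 'M[int]_d) : idealizing A ->
  forall n (Hn : (n < d)%N) (i k : 'I_d), (k <= n)%N ->
  (A (Ordinal Hn) (Ordinal Hn) %| A i k)%Z.
Proof.
case=> Htri Hdiag Hid.
elim=> [|n IH] Hn i k Hk.
  have -> : k = Ordinal Hn by apply: val_inj => /=; move: Hk; case: (nat_of_ord k).
  have [Hi|Hi] := leqP i 0.
    have -> : i = Ordinal Hn by apply: val_inj => /=; move: Hi; case: (nat_of_ord i).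
    exact: dvdzz.
  by rewrite Htri ?dvdz0.
have Hn' : (n < d)%N by apply: ltnW.
set j := Ordinal Hn'. set m := Ordinal Hn.
have [c [Hc0 [Hr0 Hrs]]] := Hid j Hn.
have split_sum : forall i : 'I_d, \sum_(k < d) c k * A i k =
    c m * A i m + \sum_(k < d | k != m) c k * A i k.
  by move=> i'; rewrite (bigD1 m).
have rest : forall i : 'I_d, (A j j %| \sum_(k < d | k != m) c k * A i k)%Z.
  move=> i'; apply: rpred_sum => k' Hk'.
  have [Hle|Hgt] := leqP k' n.
    by apply: dvdz_mull; apply: IH.
  have Hgt2 : (n.+1 < k')%N.
    rewrite ltn_neqAle Hgt andbT; apply/negP => /eqP E.
    have Ekm : k' = m by apply: val_inj; rewrite /= -E.
    by rewrite Ekm eqxx in Hk'.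
  by rewrite Hc0 ?mul0r ?dvdz0.
have lead : A j j = c m * A m m.
  have E := Hrs m j erefl.
  rewrite split_sum big1 ?addr0 in E; first by rewrite -E.
  move=> k' Hk'.
  have [Hle|Hgt] := leqP k' n.
    by rewrite Htri ?mulr0.
  have Hgt2 : (n.+1 < k')%N.
    rewrite ltn_neqAle Hgt andbT; apply/negP => /eqP E'.
    have Ekm : k' = m by apply: val_inj; rewrite /= -E'.
    by rewrite Ekm eqxx in Hk'.
  by rewrite Hc0 ?mul0r.
have cm0 : c m != 0.
  by apply/eqP => E; move: (Hdiag j); rewrite lead E mul0r eqxx.
have [Hle|Hgt] := leqP k n.
  apply: dvdz_trans (IH Hn' i k Hle).
  by rewrite lead; apply: dvdz_mull; apply: dvdzz.
have -> : k = m by apply: val_inj => /=; apply/eqP; rewrite eqn_leq Hgt Hk.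
rewrite -(@dvdz_mul2l (c m) (A m m) (A i m) cm0) -lead.
have Hs : (A j j %| \sum_(k < d) c k * A i k)%Z.
  case Ei: (nat_of_ord i) => [|i'].
    by rewrite Hr0 ?dvdz0.
  have Hi' : (i' < d)%N by apply: ltn_trans (ltn_ord i); rewrite Ei.
  by rewrite (Hrs i (Ordinal Hi')) //; apply: IH.
have -> : c m * A i m = \sum_(k < d) c k * A i k - \sum_(k < d | k != m) c k * A i k.
  by rewrite split_sum addrK.
by apply: rpredB.
Qed.

Theorem mainTheorem5 (d : nat) (A : 'M[int]_d) :
  idealizing A ->
  forall j : 'I_d, (1 <= j)%N ->
  forall i k : 'I_d, (i <= j)%N -> (k <= j)%N -> (A j j %| A i k)%Z.
Proof.
move=> H j _ i k _ Hk.
have := @key d A H j (ltn_ord j) i k Hk.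
by have -> : Ordinal (ltn_ord j) = j by apply: val_inj.
Qed.
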